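(* We have \begin{align*} \sum_{k=1}^\infty\frac{5k-2}{k(2k-1)2^k\binom{3k}k}&=\frac{\pi}6,\\ \sum_{k=1}^\infty\frac{(7k-3)8^k}{k(2k-1)3^k\binom{3k}k}&=\frac{8\sqrt3}9\pi,\\ \sum_{k=1}^\infty\frac{28k-11}{k(2k-1)(-4)^k\binom{3k}k}&=-2\log2,\\ \sum_{k=1}^\infty\frac{7k-2}{k(2k-1)(-3)^k\binom{4k}{2k}}&=-\frac{\log3}4,\\ \sum_{k=1}^\infty\frac{10k-3}{k(2k-1)\binom{4k}{2k}}&=\frac{2\sqrt3}9\pi,\\ \sum_{k=1}^\infty\frac{(3k-1)4^k}{k(2k-1)\binom{4k}{2k}}&=\frac{\pi}2,\\ \sum_{k=1}^\infty\frac{(6k-1)(-2)^{k-1}}{k(2k-1)\binom{4k}{2k}}&=\frac{\pi}4,\\ \sum_{k=1}^\infty\frac{14k-3}{k(2k-1)4^k\binom{4k}{2k}}&=\frac23\log2,\\ \sum_{k=1}^\infty\frac{(12k^2+1)4^k}{\binom{4k}{2k}}&=\frac{11}2\pi+\frac{50}3,\\ \sum_{k=1}^\infty\frac{k(126k+29)(-2)^k}{\binom{4k}{2k}}&=-2\pi-\frac{65}3,\\ \sum_{k=1}^\infty\frac{k(70k-37)}{4^k\binom{4k}{2k}}&=\frac8{729}(46\log2+111). \end{align*}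
   Context: $\log$ is the natural logarithm. *)

(* Defs.v *)
From Stdlib Require Import Reals.
From Coquelicot Require Import Coquelicot.
Open Scope R_scope.

Definition sum_from_1 (a : nat -> R) (l : R) : Prop :=
  is_series (fun n => a (S n)) l.

Definition binom (n m : nat) : R := Binomial.C n m.

(* Main.v *)
Require Import Defs.
From Stdlib Require Import Reals.
From Coquelicot Require Import Coquelicot.
From Stdlib Require Import Lra Lia Factorial.
Open Scope R_scope.

Definition Bf (a b : nat) : R := INR (fact a) * INR (fact b) / INR (fact (a + b + 1)).

Lemma factS (n : nat) : INR (fact (S n)) = INR (S n) * INR (fact n).
Proof. change (fact (S n)) with (S n * fact n)%nat. rewrite mult_INR. ring. Qed.

Lemma fact_nz (n : nat) : INR (fact n) <> 0.
Proof. apply INR_fact_neq_0. Qed.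

Ltac fixS := repeat match goal with |- context [match ?n with 0%nat => 1 | S _ => INR ?n + 1 end] =>
   change (match n with 0%nat => 1 | S _ => INR n + 1 end) with (INR (S n)) end; rewrite ?S_INR.

Lemma beta_int : forall b a, is_RInt (fun t => t ^ a * (1 - t) ^ b) 0 1 (Bf a b).
Proof.
  induction b as [|b IH]; intro a; pose proof (pos_INR a).
  - assert (H0 : is_RInt (fun t => t ^ a * (1 - t) ^ 0) 0 1
                  (minus ((fun t => t ^ S a / (INR a + 1)) 1) ((fun t => t ^ S a / (INR a + 1)) 0))).
    { apply (is_RInt_derive (fun t => t ^ S a / (INR a + 1))).
      + intros x _. auto_derive. { lra. }
        fixS. field. lra.
      + intros x _. apply (ex_derive_continuous (fun t => t ^ a * (1 - t) ^ 0)).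
        auto_derive. auto. }
    replace (Bf a 0) with (minus ((fun t => t ^ S a / (INR a + 1)) 1) ((fun t => t ^ S a / (INR a + 1)) 0)); auto.
    unfold Bf, minus, plus, opp; simpl. rewrite pow1, Nat.add_0_r, Nat.add_1_r, factS, S_INR.
    field. split. apply fact_nz. lra.
  - pose proof (pos_INR b).
    pose (F := fun t => t ^ S a * (1 - t) ^ S b / (INR a + 1)).
    assert (H1 : is_RInt (fun t => t ^ a * (1 - t) ^ S b - (INR b + 1) / (INR a + 1) * (t ^ S a * (1 - t) ^ b)) 0 1
                  (minus (F 1) (F 0))).
    { apply (is_RInt_derive F).
      + intros x _. unfold F. auto_derive. { lra. }
        fixS. replace (1 + - x) with (1 - x) by ring. simpl. field. lra.
      + intros x _. apply (ex_derive_continuous (fun t => t ^ a * (1 - t) ^ S b - (INR b + 1) / (INR a + 1) * (t ^ S a * (1 - t) ^ b))).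
        auto_derive. auto. }
    assert (H2 := is_RInt_plus _ _ _ _ _ _ H1 (is_RInt_scal _ _ _ ((INR b + 1) / (INR a + 1)) _ (IH (S a)))).
    replace (Bf a (S b)) with (plus (minus (F 1) (F 0)) (scal ((INR b + 1) / (INR a + 1)) (Bf (S a) b))).
    { eapply is_RInt_ext; [|exact H2]. intros x _. unfold plus, scal; simpl. unfold mult; simpl. ring. }
    unfold F, Bf, minus, plus, opp, scal; cbn -[pow fact INR]. unfold mult; cbn -[pow fact INR].
    replace (S a + b + 1)%nat with (S (a + b + 1)) by lia.
    replace (a + S b + 1)%nat with (S (a + b + 1)) by lia.
    rewrite !factS, !S_INR, pow1. replace ((1 - 1) ^ S b) with 0 by (simpl; ring). replace (0 ^ S a) with 0 by (simpl; ring). pose proof (pos_INR (a+b+1)). field. repeat split; try apply fact_nz; lra.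
Qed.

Lemma geom_sum (x : R) (n : nat) : x <> 1 ->
  sum_n (fun m => x ^ m) n = (1 - x ^ S n) / (1 - x).
Proof.
  intro Hx. induction n as [|n IH].
  - rewrite sum_O. simpl. field. lra.
  - rewrite sum_Sn, IH. unfold plus; simpl. field. lra.
Qed.

Lemma geom_lim (M rho : R) : 0 <= rho < 1 ->
  is_lim_seq (fun n => M * rho ^ S n / (1 - rho)) 0.
Proof.
  intro H.
  replace (Finite 0) with (Rbar_mult (M * rho / (1 - rho)) 0) by (simpl; f_equal; ring).
  eapply is_lim_seq_ext; [|apply is_lim_seq_scal_l, (is_lim_seq_geom rho)].
  - intro n. simpl. field. lra.
  - rewrite Rabs_right; lra.
Qed.

Lemma gen (p r : R -> R) (a : nat -> R) (L rho M : R) :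
  0 <= rho < 1 ->
  (forall t, 0 <= t <= 1 -> Rabs (r t) <= rho) ->
  (forall t, 0 <= t <= 1 -> Rabs (p t) <= M) ->
  (forall m, is_RInt (fun t => p t * r t ^ m) 0 1 (a (S m))) ->
  is_RInt (fun t => p t / (1 - r t)) 0 1 L ->
  is_series (fun m => a (S m)) L.
Proof.
  intros Hrho Hr Hp Ha HL.
  assert (HS : forall n, is_RInt (fun t => p t * sum_n (fun m => r t ^ m) n) 0 1
                   (sum_n (fun m => a (S m)) n)).
  { induction n as [|n IH].
    - rewrite sum_O. eapply is_RInt_ext; [|apply (Ha 0%nat)]. intros. rewrite sum_O. reflexivity.
    - rewrite sum_Sn. eapply is_RInt_ext; [|apply (is_RInt_plus _ _ _ _ _ _ IH (Ha (S n)))].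
      intros x _. rewrite sum_Sn. unfold plus; simpl. ring. }
  assert (HE : forall n, Rabs (L - sum_n (fun m => a (S m)) n) <= M * rho ^ S n / (1 - rho)).
  { intro n.
    assert (H := is_RInt_minus _ _ _ _ _ _ HL (HS n)).
    assert (H' : is_RInt (fun t => p t * r t ^ S n / (1 - r t)) 0 1
                   (minus L (sum_n (fun m => a (S m)) n))).
    { eapply is_RInt_ext; [|exact H].
      intros x Hx. rewrite Rmin_left, Rmax_right in Hx by lra.
      assert (Hrx := Hr x ltac:(lra)). apply Rabs_le_between in Hrx.
      unfold minus, plus, opp; simpl. rewrite geom_sum by lra. simpl. field. lra. }
    apply norm_RInt_le_const with (M := M * rho ^ S n / (1 - rho)) in H'.
    - unfold norm in H'; simpl in H'. unfold abs, minus, plus, opp in H'; simpl in H'. rewrite Rminus_0_r, Rmult_1_l in H'. exact H'.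
    - lra.
    - intros x Hx. unfold norm; simpl. unfold abs; simpl.
      assert (Hrx := Hr x Hx). assert (Hpx := Hp x Hx).
      assert (Hrx' := Hrx). apply Rabs_le_between in Hrx'.
      unfold Rdiv. rewrite !Rabs_mult, Rabs_inv, <- RPow_abs.
      rewrite (Rabs_right (1 - r x)) by lra.
      assert (0 <= Rabs (r x) ^ S n <= rho ^ S n).
      { split. apply pow_le, Rabs_pos. apply pow_incr. split; [apply Rabs_pos|lra]. }
      assert (0 < / (1 - r x) <= / (1 - rho)).
      { split. apply Rinv_0_lt_compat; lra. apply Rinv_le_contravar; lra. }
      assert (0 <= Rabs (p x)) by apply Rabs_pos.
      apply Rmult_le_compat.
      + apply Rmult_le_pos; [lra| exact (proj1 H0)].
      + lra.
      + apply Rmult_le_compat; [lra | exact (proj1 H0) | lra | exact (proj2 H0)].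
      + lra. }
  unfold is_series. change (is_lim_seq (sum_n (fun m => a (S m))) L).
  apply is_lim_seq_le_le with (u := fun n => L - M * rho ^ S n / (1 - rho))
                              (w := fun n => L + M * rho ^ S n / (1 - rho)).
  - intro n. specialize (HE n). apply Rabs_le_between in HE. lra.
  - assert (Hg := geom_lim M rho Hrho).
    replace (Finite L) with (Rbar_minus L 0) by (simpl; f_equal; ring).
    apply is_lim_seq_minus with L 0; auto. apply is_lim_seq_const. simpl. reflexivity.
  - assert (Hg := geom_lim M rho Hrho).
    replace (Finite L) with (Rbar_plus L 0) by (simpl; f_equal; ring).
    apply is_lim_seq_plus with L 0; auto. apply is_lim_seq_const. simpl. reflexivity.
Qed.

Definition Fk (b k : nat) : R := INR (fact (b + k)).
Lemma Fk_S b k : Fk b (S k) = (INR b + INR k + 1) * Fk b k.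
Proof. unfold Fk. rewrite Nat.add_succ_r, factS, S_INR, plus_INR. ring. Qed.
Lemma Fk_nz b k : Fk b k <> 0.
Proof. apply fact_nz. Qed.

Ltac try_b b e :=
  first [ replace (INR (fact e)) with (Fk b 0) by (unfold Fk; replace (b + 0)%nat with e by lia; reflexivity)
        | replace (INR (fact e)) with (Fk b 1) by (unfold Fk; replace (b + 1)%nat with e by lia; reflexivity)
        | replace (INR (fact e)) with (Fk b 2) by (unfold Fk; replace (b + 2)%nat with e by lia; reflexivity)
        | replace (INR (fact e)) with (Fk b 3) by (unfold Fk; replace (b + 3)%nat with e by lia; reflexivity)
        | replace (INR (fact e)) with (Fk b 4) by (unfold Fk; replace (b + 4)%nat with e by lia; reflexivity)
        | replace (INR (fact e)) with (Fk b 5) by (unfold Fk; replace (b + 5)%nat with e by lia; reflexivity)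
        | replace (INR (fact e)) with (Fk b 6) by (unfold Fk; replace (b + 6)%nat with e by lia; reflexivity)
        | replace (INR (fact e)) with (Fk b 7) by (unfold Fk; replace (b + 7)%nat with e by lia; reflexivity)
        | replace (INR (fact e)) with (Fk b 8) by (unfold Fk; replace (b + 8)%nat with e by lia; reflexivity)
        | replace (INR (fact e)) with (Fk b 9) by (unfold Fk; replace (b + 9)%nat with e by lia; reflexivity)
        | replace (INR (fact e)) with (Fk b 10) by (unfold Fk; replace (b + 10)%nat with e by lia; reflexivity) ].

Ltac nf m :=
  unfold binom, Binomial.C, Bf in *;
  repeat match goal with
  | |- context [INR (fact ?e)] =>
    first [ try_b (4 * m)%nat e | try_b (3 * m)%nat e | try_b (2 * m)%nat e | try_b m e ]
  end;
  rewrite ?Fk_S; rewrite ?mult_INR, ?S_INR, ?INR_0;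
  rewrite ?Nat.sub_0_r, ?Rpow_mult_distr, ?pow_inv, <- ?tech_pow_Rmult, ?pow1.

Ltac nzs := repeat split; try apply Fk_nz; try (apply pow_nonzero; lra); try lra.

Lemma u2_bound t : 0 <= t <= 1 -> 0 <= t * (1 - t) <= 1/4.
Proof.
  intro Ht. split. apply Rmult_le_pos; lra.
  assert (0 <= (t - 1/2) * (t - 1/2)) by apply Rle_0_sqr. lra.
Qed.

Lemma u3_bound t : 0 <= t <= 1 -> 0 <= t * (1 - t) ^ 2 <= 1/4.
Proof.
  intro Ht. assert (0 <= t * (1 - t) <= 1/4) by (apply u2_bound; lra). simpl.
  replace (t * ((1 - t) * ((1 - t) * 1))) with ((t * (1 - t)) * (1 - t)) by ring.
  split; [apply Rmult_le_pos; lra|]. nra.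
Qed.

Lemma u4_bound t : 0 <= t <= 1 -> 0 <= t ^ 2 * (1 - t) ^ 2 <= 1/16.
Proof.
  intro Ht. assert (0 <= t * (1 - t) <= 1/4) by (apply u2_bound; lra).
  replace (t ^ 2 * (1 - t) ^ 2) with ((t * (1 - t)) * (t * (1 - t))) by ring. nra.
Qed.

Lemma int_via (f g F : R -> R) (L : R) :
  (forall t, 0 <= t <= 1 -> is_derive F t (g t)) ->
  (forall t, 0 <= t <= 1 -> ex_derive g t) ->
  (forall t, 0 < t < 1 -> g t = f t) ->
  F 1 - F 0 = L -> is_RInt f 0 1 L.
Proof.
  intros HF Hg Hfg HL.
  assert (H : is_RInt g 0 1 (minus (F 1) (F 0))).
  { apply (is_RInt_derive F g).
    - intros x Hx. rewrite Rmin_left, Rmax_right in Hx by lra. auto.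
    - intros x Hx. rewrite Rmin_left, Rmax_right in Hx by lra. apply (ex_derive_continuous g); auto. }
  unfold minus, plus, opp in H; simpl in H. rewrite <- HL.
  eapply is_RInt_ext; [|exact H].
  intros x Hx. rewrite Rmin_left, Rmax_right in Hx by lra. auto.
Qed.

Lemma monom_bound i j t : 0 <= t <= 1 -> 0 <= t ^ i * (1 - t) ^ j <= 1.
Proof.
  intro Ht. split.
  - apply Rmult_le_pos; apply pow_le; lra.
  - apply Rle_trans with (1 * 1); [|lra]. apply Rmult_le_compat; try (apply pow_le; lra).
    + assert (H : t ^ i <= 1 ^ i) by (apply pow_incr; lra). rewrite pow1 in H. exact H.
    + assert (H : (1 - t) ^ j <= 1 ^ j) by (apply pow_incr; lra). rewrite pow1 in H. exact H.
Qed.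

Lemma div_eq (a b c : R) : c <> 0 -> a * c = b -> a = b / c.
Proof. intros Hc H. rewrite <- H. field. auto. Qed.

Lemma sqrt3_facts : sqrt 3 * sqrt 3 = 3 /\ 0 < sqrt 3.
Proof. split. apply sqrt_sqrt. lra. apply sqrt_lt_R0. lra. Qed.

Lemma atan_sqrt3 : atan (sqrt 3) = PI / 3.
Proof. rewrite <- tan_PI3. apply atan_tan. pose proof PI_RGT_0. lra. Qed.

Lemma atan_isqrt3 : atan (/ sqrt 3) = PI / 6.
Proof. replace (/ sqrt 3) with (1 / sqrt 3) by (unfold Rdiv; ring).
  rewrite <- tan_PI6. apply atan_tan. pose proof PI_RGT_0. lra. Qed.

Lemma atan_deriv (C k a b t : R) :
  is_derive (fun x => C * atan (k * (a * x + b))) t (C * (k * a) / (1 + (k * (a * t + b)) ^ 2)).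
Proof. auto_derive. auto. field. pose proof (pow2_ge_0 (k * (a * t + b))). lra. Qed.

Lemma k3 : (/ sqrt 3) ^ 2 = / 3 /\ / sqrt 3 <> 0 /\ / sqrt 3 * 3 = sqrt 3.
Proof.
  destruct sqrt3_facts as [H1 H2]. repeat split.
  - simpl. rewrite Rmult_1_r, <- Rinv_mult, H1. reflexivity.
  - apply Rinv_neq_0_compat. lra.
  - rewrite <- H1 at 2. field. lra.
Qed.

Lemma case1 : sum_from_1 (fun k => (5 * INR k - 2) /
      (INR k * (2 * INR k - 1) * 2 ^ k * binom (3 * k) k)) (PI / 6).
Proof.
  apply (gen (fun t => (/3) * (t ^ 0 * (1 - t) ^ 0) + (/3) * (t ^ 0 * (1 - t) ^ 1)) (fun t => t * (1 - t) ^ 2 * (/ 2)) _ _ (1/2) (1)).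
  - lra.
  - intros t Ht. assert (0 <= t * (1 - t) ^ 2 <= 1/4) by (apply u3_bound; lra).
    apply Rabs_le; split; lra.
  - intros t Ht. pose proof (monom_bound 0 0 t Ht). pose proof (monom_bound 0 1 t Ht). apply Rabs_le; split; lra.
  - intro m.
    assert (H := (is_RInt_plus _ _ _ _ _ _ (is_RInt_scal _ _ _ ((/3) * (/ 2) ^ m) _ (beta_int (2 * m + 0) (m + 0))) (is_RInt_scal _ _ _ ((/3) * (/ 2) ^ m) _ (beta_int (2 * m + 1) (m + 0))))).
    match goal with |- is_RInt _ _ _ ?v => match type of H with is_RInt _ _ _ ?w => replace v with w end end.
    + eapply is_RInt_ext; [|exact H].
      intros x _. unfold plus, scal, mult; cbn -[pow Nat.mul Nat.add].
      rewrite ?pow_add, ?pow_mult, ?Rpow_mult_distr. ring.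
    + unfold plus, scal, mult; cbn -[pow Nat.mul Nat.add fact INR Bf binom]. pose proof (pos_INR m).
      nf m. field. nzs.
  - apply (int_via _ (fun t => 2 / 3 / (1 + t ^ 2)) (fun t => 2 / 3 * atan t)).
    + intros t _. auto_derive. auto. field. nra.
    + intros t _. auto_derive. nra.
    + intros t Ht. assert (0 <= t * (1 - t) ^ 2 <= 1/4) by (apply u3_bound; lra).
      apply div_eq. lra. field. nra.
    + rewrite atan_1, atan_0. lra.
Qed.

Lemma case2 : sum_from_1 (fun k => (7 * INR k - 3) * 8 ^ k /
      (INR k * (2 * INR k - 1) * 3 ^ k * binom (3 * k) k)) (8 * sqrt 3 / 9 * PI).
Proof.
  apply (gen (fun t => (16/9) * (t ^ 0 * (1 - t) ^ 0) + (32/9) * (t ^ 0 * (1 - t) ^ 1)) (fun t => t * (1 - t) ^ 2 * (8 * / 3)) _ _ (2/3) (6)).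
  - lra.
  - intros t Ht. assert (0 <= t * (1 - t) ^ 2 <= 1/4) by (apply u3_bound; lra).
    apply Rabs_le; split; lra.
  - intros t Ht. pose proof (monom_bound 0 0 t Ht). pose proof (monom_bound 0 1 t Ht). apply Rabs_le; split; lra.
  - intro m.
    assert (H := (is_RInt_plus _ _ _ _ _ _ (is_RInt_scal _ _ _ ((16/9) * (8 * / 3) ^ m) _ (beta_int (2 * m + 0) (m + 0))) (is_RInt_scal _ _ _ ((32/9) * (8 * / 3) ^ m) _ (beta_int (2 * m + 1) (m + 0))))).
    match goal with |- is_RInt _ _ _ ?v => match type of H with is_RInt _ _ _ ?w => replace v with w end end.
    + eapply is_RInt_ext; [|exact H].
      intros x _. unfold plus, scal, mult; cbn -[pow Nat.mul Nat.add].
      rewrite ?pow_add, ?pow_mult, ?Rpow_mult_distr. ring.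
    + unfold plus, scal, mult; cbn -[pow Nat.mul Nat.add fact INR Bf binom]. pose proof (pos_INR m).
      nf m. field. nzs.
  - destruct k3 as [Hk1 [Hk2 Hk3]]. destruct sqrt3_facts as [Hs1 Hs2].
    apply (int_via _ (fun t => (16/9 / / sqrt 3) * ((/ sqrt 3) * (4)) / (1 + ((/ sqrt 3) * ((4) * t + (-1))) ^ 2))
                     (fun t => (16/9 / / sqrt 3) * atan ((/ sqrt 3) * ((4) * t + (-1))))).
    + intros t _. apply atan_deriv.
    + intros t _. auto_derive. pose proof (pow2_ge_0 ((/ sqrt 3) * ((4) * t + (-1)))). lra.
    + intros t Ht. assert (0 <= t * (1 - t) ^ 2 <= 1/4) by (apply u3_bound; lra).
      apply div_eq. lra. rewrite Rpow_mult_distr. try rewrite Hk1. field.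
      repeat split; auto; nra.
    + assert (E : / sqrt 3 * (4 * 1 + -1) = sqrt 3) by (rewrite <- Hk3 at 2; ring). rewrite E.
      replace (/ sqrt 3 * (4 * 0 + -1)) with (- / sqrt 3) by ring.
      rewrite atan_opp, atan_sqrt3, atan_isqrt3. field. lra.
Qed.

Lemma case3 : sum_from_1 (fun k => (28 * INR k - 11) /
      (INR k * (2 * INR k - 1) * (-4) ^ k * binom (3 * k) k)) (- 2 * ln 2).
Proof.
  apply (gen (fun t => (-1) * (t ^ 0 * (1 - t) ^ 0) + (-5/6) * (t ^ 0 * (1 - t) ^ 1)) (fun t => t * (1 - t) ^ 2 * (/ (-4))) _ _ (1/16) (2)).
  - lra.
  - intros t Ht. assert (0 <= t * (1 - t) ^ 2 <= 1/4) by (apply u3_bound; lra).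
    apply Rabs_le; split; lra.
  - intros t Ht. pose proof (monom_bound 0 0 t Ht). pose proof (monom_bound 0 1 t Ht). apply Rabs_le; split; lra.
  - intro m.
    assert (H := (is_RInt_plus _ _ _ _ _ _ (is_RInt_scal _ _ _ ((-1) * (/ (-4)) ^ m) _ (beta_int (2 * m + 0) (m + 0))) (is_RInt_scal _ _ _ ((-5/6) * (/ (-4)) ^ m) _ (beta_int (2 * m + 1) (m + 0))))).
    match goal with |- is_RInt _ _ _ ?v => match type of H with is_RInt _ _ _ ?w => replace v with w end end.
    + eapply is_RInt_ext; [|exact H].
      intros x _. unfold plus, scal, mult; cbn -[pow Nat.mul Nat.add].
      rewrite ?pow_add, ?pow_mult, ?Rpow_mult_distr. ring.
    + unfold plus, scal, mult; cbn -[pow Nat.mul Nat.add fact INR Bf binom]. pose proof (pos_INR m).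
      nf m. field. nzs.
  - apply (int_via _ (fun t => -(2/3) * (2 / (t + 1) - (2 * t - 3) / (t ^ 2 - 3 * t + 4)))
                     (fun t => -(2/3) * (2 * ln (t + 1) - ln (t ^ 2 - 3 * t + 4)))).
    + intros t Ht. auto_derive. repeat split; nra. field. split; nra.
    + intros t Ht. auto_derive. split; nra.
    + intros t Ht. assert (0 <= t * (1 - t) ^ 2 <= 1/4) by (apply u3_bound; lra).
      apply div_eq. lra. field. split; nra.
    + replace (1 + 1) with 2 by ring. replace (1 ^ 2 - 3 * 1 + 4) with 2 by ring.
      replace (0 ^ 2 - 3 * 0 + 4) with (2 * 2) by ring. replace (0 + 1) with 1 by ring.
      rewrite ln_mult by lra. rewrite ln_1. field.
Qed.

Lemma case4 : sum_from_1 (fun k => (7 * INR k - 2) /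
      (INR k * (2 * INR k - 1) * (-3) ^ k * binom (4 * k) (2 * k))) (- (ln 3 / 4)).
Proof.
  apply (gen (fun t => (-1/4) * (t ^ 0 * (1 - t) ^ 0) + (-1/12) * (t ^ 1 * (1 - t) ^ 0) + (-1/12) * (t ^ 2 * (1 - t) ^ 0) + (1/6) * (t ^ 3 * (1 - t) ^ 0)) (fun t => t ^ 2 * (1 - t) ^ 2 * (/ (-3))) _ _ (1/48) (1)).
  - lra.
  - intros t Ht. assert (0 <= t ^ 2 * (1 - t) ^ 2 <= 1/16) by (apply u4_bound; lra).
    apply Rabs_le; split; lra.
  - intros t Ht. pose proof (monom_bound 0 0 t Ht). pose proof (monom_bound 1 0 t Ht). pose proof (monom_bound 2 0 t Ht). pose proof (monom_bound 3 0 t Ht). apply Rabs_le; split; lra.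
  - intro m.
    assert (H := (is_RInt_plus _ _ _ _ _ _ (is_RInt_plus _ _ _ _ _ _ (is_RInt_plus _ _ _ _ _ _ (is_RInt_scal _ _ _ ((-1/4) * (/ (-3)) ^ m) _ (beta_int (2 * m + 0) (2 * m + 0))) (is_RInt_scal _ _ _ ((-1/12) * (/ (-3)) ^ m) _ (beta_int (2 * m + 0) (2 * m + 1)))) (is_RInt_scal _ _ _ ((-1/12) * (/ (-3)) ^ m) _ (beta_int (2 * m + 0) (2 * m + 2)))) (is_RInt_scal _ _ _ ((1/6) * (/ (-3)) ^ m) _ (beta_int (2 * m + 0) (2 * m + 3))))).
    match goal with |- is_RInt _ _ _ ?v => match type of H with is_RInt _ _ _ ?w => replace v with w end end.
    + eapply is_RInt_ext; [|exact H].
      intros x _. unfold plus, scal, mult; cbn -[pow Nat.mul Nat.add].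
      rewrite ?pow_add, ?pow_mult, ?Rpow_mult_distr. ring.
    + unfold plus, scal, mult; cbn -[pow Nat.mul Nat.add fact INR Bf binom]. pose proof (pos_INR m).
      nf m. field. nzs.
  - apply (int_via _ (fun t => (2 * t - 3) / (4 * (t ^ 2 - 3 * t + 3)))
                     (fun t => ln (t ^ 2 - 3 * t + 3) / 4)).
    + intros t Ht. auto_derive. nra. field. nra.
    + intros t Ht. auto_derive. nra.
    + intros t Ht. assert (0 <= t ^ 2 * (1 - t) ^ 2 <= 1/16) by (apply u4_bound; lra).
      apply div_eq. lra. field. nra.
    + replace (1 ^ 2 - 3 * 1 + 3) with 1 by ring. replace (0 ^ 2 - 3 * 0 + 3) with 3 by ring.
      rewrite ln_1. field.
Qed.

Lemma case5 : sum_from_1 (fun k => (10 * INR k - 3) /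
      (INR k * (2 * INR k - 1) * binom (4 * k) (2 * k))) (2 * sqrt 3 / 9 * PI).
Proof.
  apply (gen (fun t => (1) * (t ^ 0 * (1 - t) ^ 0) + (1) * (t ^ 1 * (1 - t) ^ 1)) (fun t => t ^ 2 * (1 - t) ^ 2 * (1)) _ _ (1/16) (2)).
  - lra.
  - intros t Ht. assert (0 <= t ^ 2 * (1 - t) ^ 2 <= 1/16) by (apply u4_bound; lra).
    apply Rabs_le; split; lra.
  - intros t Ht. pose proof (monom_bound 0 0 t Ht). pose proof (monom_bound 1 1 t Ht). apply Rabs_le; split; lra.
  - intro m.
    assert (H := (is_RInt_plus _ _ _ _ _ _ (is_RInt_scal _ _ _ ((1) * (1) ^ m) _ (beta_int (2 * m + 0) (2 * m + 0))) (is_RInt_scal _ _ _ ((1) * (1) ^ m) _ (beta_int (2 * m + 1) (2 * m + 1))))).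
    match goal with |- is_RInt _ _ _ ?v => match type of H with is_RInt _ _ _ ?w => replace v with w end end.
    + eapply is_RInt_ext; [|exact H].
      intros x _. unfold plus, scal, mult; cbn -[pow Nat.mul Nat.add].
      rewrite ?pow_add, ?pow_mult, ?Rpow_mult_distr. ring.
    + unfold plus, scal, mult; cbn -[pow Nat.mul Nat.add fact INR Bf binom]. pose proof (pos_INR m).
      nf m. field. nzs.
  - destruct k3 as [Hk1 [Hk2 Hk3]]. destruct sqrt3_facts as [Hs1 Hs2].
    apply (int_via _ (fun t => (2/3 / / sqrt 3) * ((/ sqrt 3) * (2)) / (1 + ((/ sqrt 3) * ((2) * t + (-1))) ^ 2))
                     (fun t => (2/3 / / sqrt 3) * atan ((/ sqrt 3) * ((2) * t + (-1))))).
    + intros t _. apply atan_deriv.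
    + intros t _. auto_derive. pose proof (pow2_ge_0 ((/ sqrt 3) * ((2) * t + (-1)))). lra.
    + intros t Ht. assert (0 <= t ^ 2 * (1 - t) ^ 2 <= 1/16) by (apply u4_bound; lra).
      apply div_eq. lra. rewrite Rpow_mult_distr. try rewrite Hk1. field.
      repeat split; auto; nra.
    + replace (/ sqrt 3 * (2 * 1 + -1)) with (/ sqrt 3) by ring.
      replace (/ sqrt 3 * (2 * 0 + -1)) with (- / sqrt 3) by ring.
      rewrite atan_opp, atan_isqrt3. field. lra.
Qed.

Lemma case6 : sum_from_1 (fun k => (3 * INR k - 1) * 4 ^ k /
      (INR k * (2 * INR k - 1) * binom (4 * k) (2 * k))) (PI / 2).
Proof.
  apply (gen (fun t => (1) * (t ^ 0 * (1 - t) ^ 0) + (2) * (t ^ 1 * (1 - t) ^ 1)) (fun t => t ^ 2 * (1 - t) ^ 2 * (4)) _ _ (1/4) (3)).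
  - lra.
  - intros t Ht. assert (0 <= t ^ 2 * (1 - t) ^ 2 <= 1/16) by (apply u4_bound; lra).
    apply Rabs_le; split; lra.
  - intros t Ht. pose proof (monom_bound 0 0 t Ht). pose proof (monom_bound 1 1 t Ht). apply Rabs_le; split; lra.
  - intro m.
    assert (H := (is_RInt_plus _ _ _ _ _ _ (is_RInt_scal _ _ _ ((1) * (4) ^ m) _ (beta_int (2 * m + 0) (2 * m + 0))) (is_RInt_scal _ _ _ ((2) * (4) ^ m) _ (beta_int (2 * m + 1) (2 * m + 1))))).
    match goal with |- is_RInt _ _ _ ?v => match type of H with is_RInt _ _ _ ?w => replace v with w end end.
    + eapply is_RInt_ext; [|exact H].
      intros x _. unfold plus, scal, mult; cbn -[pow Nat.mul Nat.add].
      rewrite ?pow_add, ?pow_mult, ?Rpow_mult_distr. ring.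
    + unfold plus, scal, mult; cbn -[pow Nat.mul Nat.add fact INR Bf binom]. pose proof (pos_INR m).
      nf m. field. nzs.
  - destruct k3 as [Hk1 [Hk2 Hk3]]. destruct sqrt3_facts as [Hs1 Hs2].
    apply (int_via _ (fun t => (1) * ((1) * (2)) / (1 + ((1) * ((2) * t + (-1))) ^ 2))
                     (fun t => (1) * atan ((1) * ((2) * t + (-1))))).
    + intros t _. apply atan_deriv.
    + intros t _. auto_derive. pose proof (pow2_ge_0 ((1) * ((2) * t + (-1)))). lra.
    + intros t Ht. assert (0 <= t ^ 2 * (1 - t) ^ 2 <= 1/16) by (apply u4_bound; lra).
      apply div_eq. lra. rewrite Rpow_mult_distr. try rewrite Hk1. field.
      repeat split; auto; nra.
    + replace (1 * (2 * 1 + -1)) with 1 by ring.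
      replace (1 * (2 * 0 + -1)) with (Ropp 1) by ring.
      rewrite atan_opp, atan_1. field.
Qed.

Lemma case7 : sum_from_1 (fun k => (6 * INR k - 1) * (-2) ^ (k - 1) /
      (INR k * (2 * INR k - 1) * binom (4 * k) (2 * k))) (PI / 4).
Proof.
  apply (gen (fun t => (1) * (t ^ 0 * (1 - t) ^ 0) + (-1) * (t ^ 1 * (1 - t) ^ 1)) (fun t => t ^ 2 * (1 - t) ^ 2 * (-2)) _ _ (1/8) (2)).
  - lra.
  - intros t Ht. assert (0 <= t ^ 2 * (1 - t) ^ 2 <= 1/16) by (apply u4_bound; lra).
    apply Rabs_le; split; lra.
  - intros t Ht. pose proof (monom_bound 0 0 t Ht). pose proof (monom_bound 1 1 t Ht). apply Rabs_le; split; lra.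
  - intro m.
    assert (H := (is_RInt_plus _ _ _ _ _ _ (is_RInt_scal _ _ _ ((1) * (-2) ^ m) _ (beta_int (2 * m + 0) (2 * m + 0))) (is_RInt_scal _ _ _ ((-1) * (-2) ^ m) _ (beta_int (2 * m + 1) (2 * m + 1))))).
    match goal with |- is_RInt _ _ _ ?v => match type of H with is_RInt _ _ _ ?w => replace v with w end end.
    + eapply is_RInt_ext; [|exact H].
      intros x _. unfold plus, scal, mult; cbn -[pow Nat.mul Nat.add].
      rewrite ?pow_add, ?pow_mult, ?Rpow_mult_distr. ring.
    + unfold plus, scal, mult; cbn -[pow Nat.mul Nat.add fact INR Bf binom]. pose proof (pos_INR m).
      nf m. field. nzs.
  - apply (int_via _ (fun t => (1 - t + t ^ 2) / (1 + 2 * (t - t ^ 2) ^ 2))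
                     (fun t => / 2 * atan ((2 * t - 1) / (1 + 2 * t - 2 * t ^ 2)))).
    + intros t Ht. auto_derive. nra. field. repeat split; [pose proof (pow2_ge_0 (t - t ^ 2)); lra | nra | nra].
    + intros t Ht. auto_derive. nra.
    + intros t Ht. assert (0 <= t ^ 2 * (1 - t) ^ 2 <= 1/16) by (apply u4_bound; lra).
      apply div_eq. lra. field. nra.
    + replace ((2 * 1 - 1) / (1 + 2 * 1 - 2 * 1 ^ 2)) with 1 by field.
      replace ((2 * 0 - 1) / (1 + 2 * 0 - 2 * 0 ^ 2)) with (Ropp 1) by field.
      rewrite atan_opp, atan_1. field.
Qed.

Lemma case8 : sum_from_1 (fun k => (14 * INR k - 3) /
      (INR k * (2 * INR k - 1) * 4 ^ k * binom (4 * k) (2 * k))) (2 / 3 * ln 2).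
Proof.
  apply (gen (fun t => (1/2) * (t ^ 0 * (1 - t) ^ 0) + (-1/4) * (t ^ 1 * (1 - t) ^ 1)) (fun t => t ^ 2 * (1 - t) ^ 2 * (/ 4)) _ _ (1/64) (1)).
  - lra.
  - intros t Ht. assert (0 <= t ^ 2 * (1 - t) ^ 2 <= 1/16) by (apply u4_bound; lra).
    apply Rabs_le; split; lra.
  - intros t Ht. pose proof (monom_bound 0 0 t Ht). pose proof (monom_bound 1 1 t Ht). apply Rabs_le; split; lra.
  - intro m.
    assert (H := (is_RInt_plus _ _ _ _ _ _ (is_RInt_scal _ _ _ ((1/2) * (/ 4) ^ m) _ (beta_int (2 * m + 0) (2 * m + 0))) (is_RInt_scal _ _ _ ((-1/4) * (/ 4) ^ m) _ (beta_int (2 * m + 1) (2 * m + 1))))).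
    match goal with |- is_RInt _ _ _ ?v => match type of H with is_RInt _ _ _ ?w => replace v with w end end.
    + eapply is_RInt_ext; [|exact H].
      intros x _. unfold plus, scal, mult; cbn -[pow Nat.mul Nat.add].
      rewrite ?pow_add, ?pow_mult, ?Rpow_mult_distr. ring.
    + unfold plus, scal, mult; cbn -[pow Nat.mul Nat.add fact INR Bf binom]. pose proof (pos_INR m).
      nf m. field. nzs.
  - apply (int_via _ (fun t => (1 / (1 + t) + 1 / (2 - t)) / 3)
                     (fun t => (ln (1 + t) - ln (2 - t)) / 3)).
    + intros t Ht. auto_derive. split; lra. field. split; lra.
    + intros t Ht. auto_derive. split; lra.
    + intros t Ht. assert (0 <= t ^ 2 * (1 - t) ^ 2 <= 1/16) by (apply u4_bound; lra).
      apply div_eq. lra. field. split; lra.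
    + replace (1 + 1) with 2 by ring. replace (2 - 1) with 1 by ring.
      replace (1 + 0) with 1 by ring. replace (2 - 0) with 2 by ring.
      rewrite ln_1. field.
Qed.


Lemma tele (a b G : nat -> R) (c Lb : R) :
  is_series (fun m => b (S m)) Lb ->
  (forall m, a (S m) = c * b (S m) + (G (S (S m)) - G (S m))) ->
  is_lim_seq G 0 ->
  is_series (fun m => a (S m)) (c * Lb - G 1%nat).
Proof.
  intros Hb Ha HG.
  assert (HS : forall n, sum_n (fun m => a (S m)) n
                = c * sum_n (fun m => b (S m)) n + (G (S (S n)) - G 1%nat)).
  { induction n as [|n IH].
    - rewrite !sum_O, Ha. reflexivity.
    - rewrite !sum_Sn, IH, Ha. unfold plus; simpl. ring. }
  unfold is_series. change (is_lim_seq (sum_n (fun m => a (S m))) (c * Lb - G 1%nat)).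
  eapply is_lim_seq_ext. { intro n. symmetry. apply HS. }
  replace (c * Lb - G 1%nat) with (c * Lb + (0 - G 1%nat)) by ring.
  apply is_lim_seq_plus'.
  - apply is_lim_seq_mult'. apply is_lim_seq_const. exact Hb.
  - apply is_lim_seq_minus'.
    + apply (is_lim_seq_incr_n G 2) in HG. eapply is_lim_seq_ext; [|exact HG].
      intro n. simpl. f_equal. f_equal. lia.
    + apply is_lim_seq_const.
Qed.

Lemma cube_le : forall n, (n * n * n <= 8 * 2 ^ n)%nat.
Proof.
  induction n as [|n IH]. simpl; lia.
  destruct (Nat.le_gt_cases n 3) as [Hn|Hn].
  - assert (n = 0 \/ n = 1 \/ n = 2 \/ n = 3)%nat as [H|[H|[H|H]]] by lia; subst; simpl; lia.
  - rewrite Nat.pow_succ_r'. nia.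
Qed.

Lemma cube_le_R n : INR n * INR n * INR n <= 8 * 2 ^ n.
Proof.
  rewrite <- !mult_INR. replace 2 with (INR 2) by (simpl; ring).
  rewrite <- pow_INR. replace 8 with (INR 8) by (simpl; ring). rewrite <- mult_INR.
  apply le_INR, cube_le.
Qed.

Lemma binom_pos n : 0 < binom (4 * n) (2 * n).
Proof.
  unfold binom, Binomial.C. apply Rdiv_lt_0_compat. apply INR_fact_lt_0.
  apply Rmult_lt_0_compat; apply INR_fact_lt_0.
Qed.

Lemma binom_bound n : / binom (4 * n) (2 * n) <= (4 * INR n + 1) * (/ 16) ^ n.
Proof.
  assert (HB := beta_int (2 * n) (2 * n)).
  apply norm_RInt_le_const with (M := (/ 16) ^ n) in HB.
  - change (Rabs (Bf (2 * n) (2 * n)) <= (1 - 0) * (/ 16) ^ n) in HB.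
    rewrite Rminus_0_r, Rmult_1_l in HB.
    assert (E : Bf (2 * n) (2 * n) = / ((4 * INR n + 1) * binom (4 * n) (2 * n))).
    { pose proof (pos_INR n). nf n. field. nzs. }
    rewrite E, Rabs_right in HB.
    + pose proof (binom_pos n). pose proof (pos_INR n).
      rewrite Rinv_mult in HB.
      apply (Rmult_le_reg_l (/ (4 * INR n + 1))). apply Rinv_0_lt_compat; lra.
      rewrite <- Rmult_assoc, Rinv_l, Rmult_1_l by lra. lra.
    + apply Rle_ge, Rlt_le, Rinv_0_lt_compat. pose proof (binom_pos n). pose proof (pos_INR n).
      apply Rmult_lt_0_compat; lra.
  - lra.
  - intros t Ht. change (Rabs (t ^ (2 * n) * (1 - t) ^ (2 * n)) <= (/ 16) ^ n).
    assert (H := u2_bound t Ht).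
    rewrite !pow_mult, <- Rpow_mult_distr.
    rewrite Rabs_right by (apply Rle_ge, pow_le; nra).
    replace (/ 16) with ((1/4) ^ 2) by field.
    apply pow_incr. split; [nra|].
    replace ((1/4)^2) with (1/4 * (1/4)) by ring.
    replace ((t ^ 2 * (1 - t) ^ 2)) with ((t * (1 - t)) * (t * (1 - t))) by ring.
    apply Rmult_le_compat; lra.
Qed.

Lemma poly_geom_bound (q : nat) : (1 <= q)%nat ->
  INR q ^ 2 * (4 * INR q + 1) * (4 ^ q * (/ 16) ^ q) <= 40 * (/ 2) ^ q.
Proof.
  intro Hq. apply le_INR in Hq. simpl in Hq.
  assert (E1 : 4 ^ q * (/ 16) ^ q = (/ 2) ^ q * (/ 2) ^ q).
  { rewrite <- !Rpow_mult_distr. replace (/ 2 * / 2) with (4 * / 16) by field. reflexivity. }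
  assert (E2 : 2 ^ q * (/ 2) ^ q = 1).
  { rewrite <- Rpow_mult_distr. replace (2 * / 2) with 1 by field. apply pow1. }
  assert (H3 := cube_le_R q).
  assert (Hp : 0 < (/ 2) ^ q) by (apply pow_lt; lra).
  assert (Hp2 : 0 < 2 ^ q) by (apply pow_lt; lra).
  rewrite E1.
  apply Rle_trans with (5 * (INR q * INR q * INR q) * ((/ 2) ^ q * (/ 2) ^ q)).
  - apply Rmult_le_compat_r. apply Rmult_le_pos; lra.
    simpl. nra.
  - apply Rle_trans with (5 * (8 * 2 ^ q) * ((/ 2) ^ q * (/ 2) ^ q)).
    + apply Rmult_le_compat_r. apply Rmult_le_pos; lra. lra.
    + replace (5 * (8 * 2 ^ q) * ((/ 2) ^ q * (/ 2) ^ q)) with (40 * (2 ^ q * (/ 2) ^ q) * (/ 2) ^ q) by ring.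
      rewrite E2. lra.
Qed.

Lemma G_lim (W : nat -> R) (s K : R) : Rabs s <= 4 -> 0 <= K ->
  (forall n, Rabs (W (S n)) <= K * INR (S n) ^ 2) ->
  is_lim_seq (fun n => W n * s ^ n / binom (4 * n) (2 * n)) 0.
Proof.
  intros Hs HK HW. apply is_lim_seq_incr_1.
  apply is_lim_seq_le_le with (u := fun n => - (40 * K * (/ 2) ^ (S n)))
                              (w := fun n => 40 * K * (/ 2) ^ (S n)).
  - intro n. apply Rabs_le_between.
    pose proof (binom_pos (S n)) as Hb. pose proof (binom_bound (S n)) as Hbb.
    pose proof (poly_geom_bound (S n) ltac:(lia)) as Hpg.
    pose proof (HW n) as Hw.
    assert (Hs' : Rabs s ^ S n <= 4 ^ S n) by (apply pow_incr; split; [apply Rabs_pos|lra]).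
    assert (Hb' : 0 < / binom (4 * S n) (2 * S n)) by (apply Rinv_0_lt_compat; lra).
    unfold Rdiv. rewrite !Rabs_mult, <- RPow_abs, (Rabs_right (/ _)) by lra.
    apply Rle_trans with ((K * INR (S n) ^ 2) * 4 ^ S n * ((4 * INR (S n) + 1) * (/ 16) ^ S n)).
    + apply Rmult_le_compat; try apply Rmult_le_pos; try apply Rabs_pos; try apply pow_le; try apply Rabs_pos; try lra.
      apply Rmult_le_compat; try apply Rabs_pos; try apply pow_le; try apply Rabs_pos; lra.
    + replace (K * INR (S n) ^ 2 * 4 ^ S n * ((4 * INR (S n) + 1) * (/ 16) ^ S n))
        with (K * (INR (S n) ^ 2 * (4 * INR (S n) + 1) * (4 ^ S n * (/ 16) ^ S n))) by ring.
      replace (40 * K * (/ 2) ^ S n) with (K * (40 * (/ 2) ^ S n)) by ring.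
      apply Rmult_le_compat_l; lra.
  - eapply is_lim_seq_ext with (u := fun n => (- (40 * K * / 2)) * (/ 2) ^ n).
    + intro n. simpl. ring.
    + replace 0 with (- (40 * K * / 2) * 0) by ring.
      apply is_lim_seq_mult'. apply is_lim_seq_const. apply is_lim_seq_geom. rewrite Rabs_right; lra.
  - eapply is_lim_seq_ext with (u := fun n => (40 * K * / 2) * (/ 2) ^ n).
    + intro n. simpl. ring.
    + replace 0 with ((40 * K * / 2) * 0) by ring.
      apply is_lim_seq_mult'. apply is_lim_seq_const. apply is_lim_seq_geom. rewrite Rabs_right; lra.
Qed.

Lemma ratio_bound (N : R) : 1 <= N -> 0 <= (4 * N - 3) * (4 * N - 1) / (N * (2 * N - 1)) <= 8.
Proof.
  intro H. assert (Hy : 0 < N * (2 * N - 1)) by nra. split.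
  - apply Rdiv_le_0_compat; nra.
  - apply Rmult_le_reg_r with (N * (2 * N - 1)); auto.
    unfold Rdiv. rewrite Rmult_assoc, Rinv_l, Rmult_1_r by lra. nra.
Qed.

Lemma W_bound (N C u0 u1 u2 : R) : 1 <= N -> Rabs u0 + Rabs u1 + Rabs u2 <= C ->
  Rabs ((4 * N - 3) * (4 * N - 1) / (N * (2 * N - 1)) * (u0 + u1 * N + u2 * N ^ 2)) <= 8 * C * N ^ 2.
Proof.
  intros HN HC. destruct (ratio_bound N HN) as [H1 H2].
  rewrite Rabs_mult, (Rabs_right (_ / _)) by lra.
  assert (HU : Rabs (u0 + u1 * N + u2 * N ^ 2) <= C * N ^ 2).
  { eapply Rle_trans. apply Rabs_triang. eapply Rle_trans. apply Rplus_le_compat_r, Rabs_triang.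
    rewrite !Rabs_mult, (Rabs_right N), (Rabs_right (N ^ 2)) by (try apply Rle_ge, pow_le; lra).
    pose proof (Rabs_pos u0). pose proof (Rabs_pos u1). pose proof (Rabs_pos u2).
    assert (N <= N ^ 2) by nra. assert (1 <= N ^ 2) by nra. nra. }
  replace (8 * C * N ^ 2) with (8 * (C * N ^ 2)) by ring.
  apply Rmult_le_compat; auto. apply Rabs_pos.
Qed.

Ltac Gtac n C := eapply Rle_trans;
  [apply (W_bound _ C); [rewrite S_INR; pose proof (pos_INR n); lra
                        | unfold Rabs; repeat destruct Rcase_abs; lra] | lra].

Lemma case9 : sum_from_1 (fun k => (12 * INR k ^ 2 + 1) * 4 ^ k /
      binom (4 * k) (2 * k)) (11 / 2 * PI + 50 / 3).
Proof.
  pose (W := fun k : nat => (4 * INR k - 3) * (4 * INR k - 1) / (INR k * (2 * INR k - 1))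
                 * (- (11/3) + - (8/3) * INR k + - 2 * INR k ^ 2)).
  pose (G := fun k : nat => W k * 4 ^ k / binom (4 * k) (2 * k)).
  replace (11 / 2 * PI + 50 / 3) with (11 * (PI / 2) - G 1%nat).
  2:{ unfold G, W, binom, Binomial.C. simpl. field. }
  apply tele with (b := fun k => (3 * INR k - 1) * 4 ^ k /
      (INR k * (2 * INR k - 1) * binom (4 * k) (2 * k))).
  - exact case6.
  - intro m. unfold G, W. pose proof (pos_INR m). nf m. field. nzs.
  - apply (G_lim W 4 (8 * (11/3 + 8/3 + 2))). rewrite Rabs_right; lra. lra.
    intro n. Gtac n (11/3 + 8/3 + 2).
Qed.

Lemma case10 : sum_from_1 (fun k => INR k * (126 * INR k + 29) * (-2) ^ k /
      binom (4 * k) (2 * k)) (- 2 * PI - 65 / 3).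
Proof.
  pose (W := fun k : nat => (4 * INR k - 3) * (4 * INR k - 1) / (INR k * (2 * INR k - 1))
                 * (- (4/3) + - (19/3) * INR k + - 14 * INR k ^ 2)).
  pose (G := fun k : nat => W k * (-2) ^ k / binom (4 * k) (2 * k)).
  replace (- 2 * PI - 65 / 3) with ((-8) * (PI / 4) - G 1%nat).
  2:{ unfold G, W, binom, Binomial.C. simpl. field. }
  apply tele with (b := fun k => (6 * INR k - 1) * (-2) ^ (k - 1) /
      (INR k * (2 * INR k - 1) * binom (4 * k) (2 * k))).
  - exact case7.
  - intro m. unfold G, W. pose proof (pos_INR m). replace (S m - 1)%nat with m by lia. nf m. field. nzs.
  - apply (G_lim W (-2) (8 * (4/3 + 19/3 + 14))). rewrite Rabs_left; lra. lra.
    intro n. Gtac n (4/3 + 19/3 + 14).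
Qed.

Lemma case11 : sum_from_1 (fun k => INR k * (70 * INR k - 37) /
      (4 ^ k * binom (4 * k) (2 * k))) (8 / 729 * (46 * ln 2 + 111)).
Proof.
  pose (W := fun k : nat => (4 * INR k - 3) * (4 * INR k - 1) / (INR k * (2 * INR k - 1))
                 * (- (184/243) + - (8/81) * INR k + - (80/9) * INR k ^ 2)).
  pose (G := fun k : nat => W k * (/ 4) ^ k / binom (4 * k) (2 * k)).
  replace (8 / 729 * (46 * ln 2 + 111)) with ((184/243) * (2 / 3 * ln 2) - G 1%nat).
  2:{ unfold G, W, binom, Binomial.C. simpl. field. }
  apply tele with (b := fun k => (14 * INR k - 3) /
      (INR k * (2 * INR k - 1) * 4 ^ k * binom (4 * k) (2 * k))).
  - exact case8.
  - intro m. unfold G, W. pose proof (pos_INR m). nf m. field. nzs.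
  - apply (G_lim W (/ 4) (8 * (184/243 + 8/81 + 80/9))). rewrite Rabs_right; lra. lra.
    intro n. Gtac n (184/243 + 8/81 + 80/9).
Qed.

Theorem theorem1p4 :
  sum_from_1 (fun k => (5 * INR k - 2) /
      (INR k * (2 * INR k - 1) * 2 ^ k * binom (3 * k) k)) (PI / 6) /\
  sum_from_1 (fun k => (7 * INR k - 3) * 8 ^ k /
      (INR k * (2 * INR k - 1) * 3 ^ k * binom (3 * k) k)) (8 * sqrt 3 / 9 * PI) /\
  sum_from_1 (fun k => (28 * INR k - 11) /
      (INR k * (2 * INR k - 1) * (-4) ^ k * binom (3 * k) k)) (- 2 * ln 2) /\
  sum_from_1 (fun k => (7 * INR k - 2) /
      (INR k * (2 * INR k - 1) * (-3) ^ k * binom (4 * k) (2 * k))) (- (ln 3 / 4)) /\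
  sum_from_1 (fun k => (10 * INR k - 3) /
      (INR k * (2 * INR k - 1) * binom (4 * k) (2 * k))) (2 * sqrt 3 / 9 * PI) /\
  sum_from_1 (fun k => (3 * INR k - 1) * 4 ^ k /
      (INR k * (2 * INR k - 1) * binom (4 * k) (2 * k))) (PI / 2) /\
  sum_from_1 (fun k => (6 * INR k - 1) * (-2) ^ (k - 1) /
      (INR k * (2 * INR k - 1) * binom (4 * k) (2 * k))) (PI / 4) /\
  sum_from_1 (fun k => (14 * INR k - 3) /
      (INR k * (2 * INR k - 1) * 4 ^ k * binom (4 * k) (2 * k))) (2 / 3 * ln 2) /\
  sum_from_1 (fun k => (12 * INR k ^ 2 + 1) * 4 ^ k /
      binom (4 * k) (2 * k)) (11 / 2 * PI + 50 / 3) /\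
  sum_from_1 (fun k => INR k * (126 * INR k + 29) * (-2) ^ k /
      binom (4 * k) (2 * k)) (- 2 * PI - 65 / 3) /\
  sum_from_1 (fun k => INR k * (70 * INR k - 37) /
      (4 ^ k * binom (4 * k) (2 * k))) (8 / 729 * (46 * ln 2 + 111)).
Proof.
  repeat split; [exact case1 | exact case2 | exact case3 | exact case4 | exact case5 | exact case6
    | exact case7 | exact case8 | exact case9 | exact case10 | exact case11].
Qed.

Print Assumptions theorem1p4.
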